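(* Let $n>0$ and $i_1,\dots,i_5\in\{0,1\}$, and suppose $\alpha=i_1^{(n)}i_2^{(n)}i_3^{(n)}i_4^{(n)}i_5^{(n)}\in\mathcal{L}^*(E_{\mathbb{Z}})$. Then $\alpha$ can be written in one and only one of the forms $$i_1^{(n+1)}i_3^{(n+1)}i_5^{(n)}\qquad\text{or}\qquad i_1^{(n)}i_2^{(n+1)}i_4^{(n+1)}.$$
   Context: The two-sided Thue--Morse sequence $\omega=(\omega_k)_{k\in\mathbb{Z}}$ over $\{0,1\}$ is defined by $\omega_0=0$, $\omega_{2^n+j}=1-\omega_j$ for $n\ge0$, $0\le j<2^n$, and $\omega_{-i}=\omega_{i-1}$ for $i\ge1$. $\mathcal{L}^*(E_{\mathbb{Z}})$ denotes the set of finite nonempty words occurring in $\omega$. Blocks $i^{(n)}$: $0^{(0)}=0$, $1^{(0)}=1$, and inductively $0^{(n)}=0^{(n-1)}1^{(n-1)}$, $1^{(n)}=1^{(n-1)}0^{(n-1)}$ (concatenation); $|i^{(n)}|=2^n$. *)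

(* Defs.v *)
(* Symbols {0,1} are encoded as bool: 0 = false, 1 = true. *)
From mathcomp Require Import all_boot all_order all_algebra.
Set Implicit Arguments. Unset Strict Implicit. Unset Printing Implicit Defensive.

(* One-sided Thue--Morse: w_0 = 0, w_{2^n + j} = 1 - w_j (0 <= j < 2^n).
   For k > 0, 2^n is the largest power of 2 that is <= k, i.e. n = trunc_log 2 k.
   Fuel-based recursion; fuel k.+1 is always sufficient since k strictly decreases. *)
Fixpoint tm_fuel (f k : nat) : bool :=
  match f with
  | 0 => false
  | f'.+1 => if k == 0 then false else ~~ tm_fuel f' (k - 2 ^ trunc_log 2 k)
  end.

Definition tm (k : nat) : bool := tm_fuel k.+1 k.

(* Two-sided: omega_{-i} = omega_{i-1} for i >= 1; Negz k = -(k+1). *)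
Definition omega (z : int) : bool :=
  match z with
  | Posz k => tm k
  | Negz k => tm k
  end.

Definition occurs_at (w : seq bool) (m : int) : Prop :=
  w = [seq omega (m + (j%:Z))%R | j <- iota 0 (size w)].

Definition inL (w : seq bool) : Prop := 0 < size w /\ exists m : int, occurs_at w m.

Fixpoint blk (n : nat) (i : bool) : seq bool :=
  match n with
  | 0 => [:: i]
  | n'.+1 => blk n' i ++ blk n' (~~ i)
  end.

(* Main.v *)
Require Import Defs.
From mathcomp Require Import all_boot all_order all_algebra.
From mathcomp Require Import zify.
Import GRing.Theory.

Fixpoint tb (f k : nat) : bool :=
  match f with 0 => false | f'.+1 => odd k (+) tb f' k./2 end.
Definition tmb k := tb k.+1 k.

Lemma tb0 f : tb f 0 = false.
Proof. by elim: f => //= f ->. Qed.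

Lemma tb_indep f g k : k <= f -> k <= g -> tb f k = tb g k.
Proof.
elim: f g k => [|f IH] [|g] k /=.
- by [].
- by rewrite leqn0 => /eqP -> _; rewrite tb0.
- by rewrite leqn0 => _ /eqP ->; rewrite tb0.
- move=> hf hg; congr (_ (+) _); apply: IH.
  + have := odd_double_half k; case: (odd k) => /=; lia.
  + have := odd_double_half k; case: (odd k) => /=; lia.
Qed.

Lemma tmb_rec k : tmb k = odd k (+) tmb k./2.
Proof.
rewrite /tmb /=; congr (_ (+) _); apply: (@tb_indep k (k./2).+1 (k./2)) => //.
have := odd_double_half k; case: (odd k) => /=; lia.
Qed.

Lemma tmb_2 k (b : bool) : tmb (b + k.*2) = b (+) tmb k.
Proof. by rewrite tmb_rec half_bit_double oddD odd_double addbF; case: b. Qed.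

Lemma tmb_pow n j : j < 2 ^ n -> tmb (2 ^ n + j) = ~~ tmb j.
Proof.
elim: n j => [|n IH] j hj.
  by move: hj; rewrite expn0 ltnS leqn0 => /eqP ->.
have -> : 2 ^ n.+1 + j = odd j + (2 ^ n + j./2).*2.
  by rewrite doubleD -[in LHS](odd_double_half j) expnS mul2n; lia.
rewrite tmb_2 IH; last by rewrite ltn_half_double -mul2n -expnS.
by rewrite [in RHS]tmb_rec addbN.
Qed.

Lemma tm_fuel_eq f k : k < f -> tm_fuel f k = tmb k.
Proof.
elim: f k => [|f IH] k //= hk.
case: eqP => [->|/eqP k0]; first by [].
have h2 : 1 < 2 by [].
have k0' : 0 < k by rewrite lt0n.
have h1 := trunc_logP h2 k0'.
have h3 := trunc_log_ltn k h2.
have hp : 0 < 2 ^ trunc_log 2 k by rewrite expn_gt0.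
rewrite IH; last by lia.
set t := trunc_log 2 k in h1 h3 hp *.
have e : k = 2 ^ t + (k - 2 ^ t) by lia.
rewrite [in RHS]e tmb_pow ?negbK //.
by move: h3; rewrite expnS; lia.
Qed.

Lemma tm_eq k : tm k = tmb k.
Proof. exact: tm_fuel_eq. Qed.

Definition S (c : bool) (z : int) : bool :=
  match z with Posz k => tmb k | Negz k => c (+) tmb k end.

Lemma omega_S z : omega z = S false z.
Proof. by case: z => k /=; rewrite tm_eq. Qed.

Local Open Scope ring_scope.

Lemma S_2 c (q : int) (b : bool) : S c (q * 2 + (b : nat)%:Z) = S (~~c) q (+) b.
Proof.
case: q => k.
  have -> : Posz k * 2 + (b : nat)%:Z = Posz (b + k.*2)%N by case: b; lia.
  by rewrite /= tmb_2 addbC.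
case: b.
  have -> : Negz k * 2 + (true : nat)%:Z = Negz (false + k.*2)%N by lia.
  by rewrite /S tmb_2 /=; case: c; case: (tmb k).
have -> : Negz k * 2 + (false : nat)%:Z = Negz (true + k.*2)%N by lia.
by rewrite /S tmb_2 /=; case: c; case: (tmb k).
Qed.

Lemma S_20 c (q : int) : S c (q * 2) = S (~~c) q.
Proof. by have := S_2 c q false; rewrite addr0 addbF. Qed.

Lemma S_21 c (q : int) : S c (q * 2 + 1) = ~~ S (~~c) q.
Proof. by have := S_2 c q true; rewrite addbT. Qed.

Lemma divmod2 (m : int) : exists q (b : bool), m = q * 2 + (b : nat)%:Z.
Proof.
case: m => k.
  exists (Posz k./2), (odd k); have := odd_double_half k; case: (odd k) => /=; lia.
have := odd_double_half k; case hk: (odd k) => /= e.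
  by exists (Negz k./2), false; lia.
by exists (Negz k./2), true; lia.
Qed.

Lemma no3 c (p : int) : ~ (S c p = S c (p + 1) /\ S c (p + 1) = S c (p + 2)).
Proof.
have [q [[] ->]] := divmod2 p; move=> [h1 h2].
  move: h2; have -> : q * 2 + (true : nat)%:Z + 1 = (q + 1) * 2 by lia.
  have -> : q * 2 + (true : nat)%:Z + 2 = (q + 1) * 2 + 1 by lia.
  by rewrite S_20 S_21; case: (S _ _).
move: h1; have -> : q * 2 + (false : nat)%:Z + 1 = q * 2 + 1 by lia.
have -> : q * 2 + (false : nat)%:Z = q * 2 by lia.
by rewrite S_20 S_21; case: (S _ _).
Qed.

Definition occ (T : int -> bool) (w : seq bool) (m : int) :=
  forall j, (j < size w)%N -> nth false w j = T (m + j%:Z)%R.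

Definition up (w : seq bool) := flatten [seq [:: b; ~~ b] | b <- w].
Definition upn n w := iter n up w.

Lemma size_up w : size (up w) = (size w).*2.
Proof. by elim: w => //= b w IH; rewrite IH doubleS. Qed.

Lemma size_upn n w : (size w <= size (upn n w))%N.
Proof.
elim: n => //= n IH; rewrite size_up; apply: leq_trans IH _; rewrite -addnn leq_addr //.
Qed.

Lemma nth_up w j (b : bool) : (j < size w)%N -> nth false (up w) (b + j.*2) = nth false w j (+) b.
Proof.
elim: w j => //= a w IH [|j] /= hj.
  by clear IH; case: b => /=; rewrite ?addbF ?addbT.
rewrite doubleS addnS addnS /=; exact: IH.
Qed.

Local Open Scope ring_scope.

Lemma L1 c w m : (2 <= size w)%N -> occ (S c) (up w) m ->
  exists m', m = m' * 2 /\ occ (S (~~c)) w m'.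
Proof.
move=> hw ho.
have hh : forall j (b : bool), (j < size w)%N ->
    nth false w j (+) b = S c (m + (b + j.*2)%N%:Z).
  move=> j b hj; rewrite -nth_up //; apply: ho; rewrite size_up; case: b; lia.
have [q [[] e]] := divmod2 m; last first.
  exists q; split; first by rewrite e addr0.
  move=> j hj; have := hh j false hj; rewrite addbF => ->.
  have -> : m + (false + j.*2)%N%:Z = (q + j%:Z) * 2 by rewrite e; lia.
  by rewrite S_20.
have h0 : (0 < size w)%N by lia.
have h1 : (1 < size w)%N by lia.
have a1 := hh 0%N false h0; have a2 := hh 0%N true h0.
have a3 := hh 1%N false h1; have a4 := hh 1%N true h1.
move: a1 a2 a3 a4.
have -> : m + (true + 0.*2)%N%:Z = (q + 1) * 2 by rewrite e; lia.
have -> : m + (false + 0.*2)%N%:Z = q * 2 + 1 by rewrite e; lia.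
have -> : m + (true + 1.*2)%N%:Z = (q + 2) * 2 by rewrite e; lia.
have -> : m + (false + 1.*2)%N%:Z = (q + 1) * 2 + 1 by rewrite e; lia.
rewrite !S_20 !S_21 !addbT !addbF => a1 a2 a3 a4.
exfalso; apply: (@no3 (~~c) q); split.
  by move: a1 a2; case: (nth _ _ _); case: (S _ q) => //= _; case: (S _ (q+1)).
by move: a3 a4; case: (nth _ _ _); case: (S _ (q+1)) => //= _; case: (S _ (q+2)).
Qed.
Local Open Scope ring_scope.

Lemma Ln n c w m : (2 <= size w)%N -> occ (S c) (upn n w) m ->
  exists m', m = m' * (2 ^ n)%N%:Z /\ occ (S (c (+) odd n)) w m'.
Proof.
elim: n c m => [|n IH] c m hw ho.
  by exists m; rewrite expn0 mulr1 addbF.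
have [m1 [e1 ho1]] := @L1 c (upn n w) m (leq_trans hw (size_upn n w)) ho.
have [m' [e2 ho2]] := IH _ _ hw ho1.
exists m'; split; first by rewrite e1 e2 expnS; lia.
by move: ho2; rewrite oddS addbN addNb.
Qed.

Lemma flat_blk_up n w : flatten (map (blk n.+1) w) = flatten (map (blk n) (up w)).
Proof. by elim: w => //= b w ->; rewrite !catA. Qed.

Lemma flat_blk n w : flatten (map (blk n) w) = upn n w.
Proof.
elim: n w => [|n IH] w.
  by elim: w => //= b w ->.
by rewrite flat_blk_up IH /upn iterSr.
Qed.

Lemma size_blk n b : size (blk n b) = (2 ^ n)%N.
Proof. by elim: n b => //= n IH b; rewrite size_cat !IH expnS mul2n addnn. Qed.

Lemma head_blk n b : nth false (blk n b) 0 = b.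
Proof.
elim: n b => //= n IH b; rewrite nth_cat size_blk expn_gt0 /=; exact: IH.
Qed.

Lemma catI (s1 s2 t1 t2 : seq bool) : size s1 = size s2 -> s1 ++ t1 = s2 ++ t2 ->
  s1 = s2 /\ t1 = t2.
Proof. by move=> hs /eqP; rewrite eqseq_cat // => /andP[/eqP -> /eqP ->]. Qed.

Lemma eq5 n a1 a2 a3 a4 a5 b1 b2 b3 b4 b5 :
  blk n a1 ++ blk n a2 ++ blk n a3 ++ blk n a4 ++ blk n a5 =
  blk n b1 ++ blk n b2 ++ blk n b3 ++ blk n b4 ++ blk n b5 ->
  [/\ a1 = b1, a2 = b2, a3 = b3, a4 = b4 & a5 = b5].
Proof.
have cb : forall a b (t1 t2 : seq bool), blk n a ++ t1 = blk n b ++ t2 -> a = b /\ t1 = t2.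
  move=> a b t1 t2 /catI []; first by rewrite !size_blk.
  by move=> e ->; rewrite -(head_blk n a) -(head_blk n b) e.
move=> /cb [-> /cb [-> /cb [-> /cb [-> ]]]].
by move=> e; rewrite -(head_blk n a5) -(head_blk n b5) e.
Qed.

Theorem lemma3p4 (n : nat) (i1 i2 i3 i4 i5 : bool) :
  (0 < n)%N ->
  let alpha := blk n i1 ++ blk n i2 ++ blk n i3 ++ blk n i4 ++ blk n i5 in
  inL alpha ->
  let A := alpha = blk n.+1 i1 ++ blk n.+1 i3 ++ blk n i5 in
  let B := alpha = blk n i1 ++ blk n.+1 i2 ++ blk n.+1 i4 in
  (A \/ B) /\ ~ (A /\ B).
Proof.
move=> _ alpha [_ [m hm]] A B.
have hA : A <-> (i2 = ~~ i1 /\ i4 = ~~ i3).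
  rewrite /A /alpha /= -!catA; split; first by move/eq5 => [_ -> _ -> _].
  by case=> -> ->.
have hB : B <-> (i3 = ~~ i2 /\ i5 = ~~ i4).
  rewrite /B /alpha /= -!catA; split; first by move/eq5 => [_ _ -> _ ->].
  by case=> -> ->.
have ho : occ (S false) (upn n [:: i1; i2; i3; i4; i5]) m.
  rewrite -flat_blk /= cats0 -/alpha => j hj.
  by rewrite [in LHS]hm (nth_map 0%N) ?size_iota // nth_iota // add0n omega_S.
have [m' [_ ho']] := @Ln n false [:: i1; i2; i3; i4; i5] m isT ho.
rewrite /= in ho'.
have t1 := ho' 0%N isT; have t2 := ho' 1%N isT; have t3 := ho' 2%N isT.
have t4 := ho' 3%N isT; have t5 := ho' 4%N isT.
move: t1 t2 t3 t4 t5 => /= t1 t2 t3 t4 t5.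
have [q [[] e]] := divmod2 m'.
- move: t1 t2 t3 t4 t5.
  have -> : m' + 0%N%:Z = q * 2 + 1 by rewrite e; lia.
  have -> : m' + 1%N%:Z = (q + 1) * 2 by rewrite e; lia.
  have -> : m' + 2%N%:Z = (q + 1) * 2 + 1 by rewrite e; lia.
  have -> : m' + 3%N%:Z = (q + 2) * 2 by rewrite e; lia.
  have -> : m' + 4%N%:Z = (q + 2) * 2 + 1 by rewrite e; lia.
  rewrite !S_20 !S_21 => t1 t2 t3 t4 t5.
  split; first by right; apply/hB; rewrite t2 t3 t4 t5 ?negbK.
  move=> [/hA [h1 h2] _]; move: h1 h2; rewrite t1 t2 t3 t4 => h1 h2; apply: (@no3 (~~ false (+) odd n) q); split.
    by move: h1; case: (S _ q); case: (S _ (q+1)).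
  by move: h2; case: (S _ (q+2)); case: (S _ (q+1)).
- move: t1 t2 t3 t4 t5.
  have -> : m' + 0%N%:Z = q * 2 by rewrite e; lia.
  have -> : m' + 1%N%:Z = q * 2 + 1 by rewrite e; lia.
  have -> : m' + 2%N%:Z = (q + 1) * 2 by rewrite e; lia.
  have -> : m' + 3%N%:Z = (q + 1) * 2 + 1 by rewrite e; lia.
  have -> : m' + 4%N%:Z = (q + 2) * 2 by rewrite e; lia.
  rewrite !S_20 !S_21 => t1 t2 t3 t4 t5.
  split; first by left; apply/hA; rewrite t1 t2 t3 t4.
  move=> [_ /hB [h1 h2]]; move: h1 h2; rewrite t2 t3 t4 t5 => h1 h2; apply: (@no3 (~~ false (+) odd n) q); split.
    by move: h1; case: (S _ q); case: (S _ (q+1)).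
  by move: h2; case: (S _ (q+2)); case: (S _ (q+1)).
Qed.
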